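(* Let $t\in\mathbb{N}$. There exists $n_0(t)$ such that for all $n\ge n_0(t)$, if $\mathcal{F}\subseteq\mathcal{M}_{2n-1}$ is $t$-intersecting, then $|\mathcal{F}|\le(2(n-t)-1)!!$.
   Context: $\mathcal{M}_{2n-1}$ is the set of near-perfect matchings of the complete graph $K_{2n-1}$ (matchings with $n-1$ edges). A family $\mathcal{F}\subseteq\mathcal{M}_{2n-1}$ is $t$-intersecting if $|m\cap m'|\ge t$ for all $m,m'\in\mathcal{F}$. $(2k-1)!!=1\cdot3\cdots(2k-1)$. *)

(* Defs.v *)
From mathcomp Require Import all_boot.
Set Implicit Arguments. Unset Strict Implicit. Unset Printing Implicit Defensive.

(* Double factorial of odd numbers: dfact k = (2k-1)!! = 1*3*...*(2k-1), dfact 0 = 1. *)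
Fixpoint oddfact (k : nat) : nat :=
  match k with 0 => 1 | k'.+1 => (k'.*2.+1) * oddfact k' end.

Definition is_edge (m : nat) (e : {set 'I_m}) : bool := #|e| == 2.

Definition is_matching (m : nat) (M : {set {set 'I_m}}) : bool :=
  [forall e in M, is_edge e] &&
  [forall e in M, forall f in M, (e != f) ==> [disjoint e & f]].

Definition near_perfect (n : nat) (M : {set {set 'I_(2*n-1)}}) : bool :=
  is_matching M && (#|M| == n - 1).

Definition t_intersecting (m t : nat) (F : {set {set {set 'I_m}}}) : bool :=
  [forall M in F, forall M' in F, t <= #|M :&: M'|].

(* Main.v *)
Require Import Defs.
From mathcomp Require Import all_boot.
From mathcomp Require Import zify.
Set Implicit Arguments. Unset Strict Implicit. Unset Printing Implicit Defensive.

Section Count.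
Variable m : nat.
Local Notation V := 'I_m.

Definition mset (U : {set V}) (k : nat) : {set {set {set V}}} :=
  [set M | [&& is_matching M, #|M| == k & [forall e in M, e \subset U]]].

Lemma matchingP (M : {set {set V}}) :
  is_matching M -> (forall e, e \in M -> #|e| = 2) /\
     (forall e f, e \in M -> f \in M -> e != f -> [disjoint e & f]).
Proof.
case/andP=> /forall_inP H1 /forall_inP H2; split.
  by move=> e /H1 /eqP.
by move=> e f eM fM ef; move: (H2 e eM) => /forall_inP /(_ f fM) /implyP; apply.
Qed.

Lemma matching_sub (M N : {set {set V}}) : N \subset M -> is_matching M -> is_matching N.
Proof.
move=> sNM /matchingP [H1 H2]; apply/andP; split.
  by apply/forall_inP=> e eN; rewrite /is_edge H1 // (subsetP sNM).
apply/forall_inP=> e eN; apply/forall_inP=> f fN; apply/implyP=> ef.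
by apply: H2 => //; apply: (subsetP sNM).
Qed.

Lemma cover_card (M : {set {set V}}) : is_matching M -> #|cover M| = 2 * #|M|.
Proof.
move=> /matchingP [H1 H2].
have tM : trivIset M.
  by apply/trivIsetP=> e f eM fM ef; apply: H2.
rewrite -(eqP tM) (eq_bigr (fun _ => 2)); last by move=> e /H1.
by rewrite sum_nat_const mulnC.
Qed.

Lemma mset_zero (U : {set V}) k : #|U| < 2 * k -> mset U k = set0.
Proof.
move=> hU; apply/setP=> M; rewrite !inE.
apply/negP=> /and3P [hM /eqP hk /forall_inP hs].
have : cover M \subset U.
  by apply/subsetP=> x /bigcupP [e eM xe]; apply: (subsetP (hs e eM)).
move/subset_leq_card; rewrite cover_card // hk; lia.
Qed.

Lemma union_bound (T I : finType) (A : {set I}) (C : I -> {set T}) :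
  #|\bigcup_(i in A) C i| <= \sum_(i in A) #|C i|.
Proof.
elim/big_rec2: _ => [|i U s _ IH]; first by rewrite cards0.
rewrite cardsU; lia.
Qed.

Lemma mset_rec (U : {set V}) k u : u \in U ->
  #|mset U k.+1| <= #|mset (U :\ u) k.+1| + \sum_(v in U :\ u) #|mset (U :\ u :\ v) k|.
Proof.
move=> uU.
pose A v := [set M in mset U k.+1 | [set u; v] \in M].
have hA : forall v, #|A v| <= #|mset (U :\ u :\ v) k|.
  move=> v.
  have inj : {in A v &, injective (fun M => M :\ [set u; v])}.
    move=> M N; rewrite !inE => /andP [_ hM] /andP [_ hN] eq.
    by rewrite -(setD1K hM) -(setD1K hN) eq.
  rewrite -(card_in_imset inj); apply: subset_leq_card.
  apply/subsetP=> _ /imsetP [M + ->]; rewrite !inE => /andP [/and3P [hM /eqP hk /forall_inP hs] huv].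
  have [H1 H2] := matchingP hM.
  apply/and3P; split.
  - by apply: matching_sub hM; apply: subsetDl.
  - by move: hk; rewrite (cardsD1 [set u; v] M) huv add1n => -[->].
  - apply/forall_inP=> f; rewrite !inE => /andP [fne fM].
    have dj := H2 _ _ fM huv fne.
    apply/subsetP=> x xf; rewrite !inE (subsetP (hs f fM)) // andbT.
    apply/andP; split.
    + by apply/eqP=> xv; have := disjointFr dj xf; rewrite !inE xv eqxx orbT.
    + by apply/eqP=> xu; have := disjointFr dj xf; rewrite !inE xu eqxx.
have sub : mset U k.+1 \subset mset (U :\ u) k.+1 :|: \bigcup_(v in U :\ u) A v.
  apply/subsetP=> M MU; rewrite inE.
  case: (boolP [exists e in M, u \in e]) => [/exists_inP [e eM ue]|hne].
  - apply/orP; right; move: (MU); rewrite inE => /and3P [hM _ /forall_inP hs].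
    have [H1 _] := matchingP hM.
    have : #|e :\ u| == 1 by move: (H1 e eM); rewrite (cardsD1 u e) ue add1n => -[->].
    case/cards1P=> v ev.
    have vD : v \in e :\ u by rewrite ev set11.
    move: (vD); rewrite !inE => /andP [vu ve].
    apply/bigcupP; exists v.
      by rewrite !inE vu (subsetP (hs e eM)).
    rewrite inE MU /=.
    suff -> : [set u; v] = e by [].
    by rewrite -(setD1K ue) ev setUC.
  - apply/orP; left; move: MU; rewrite !inE => /and3P [-> -> /forall_inP hs] /=.
    apply/forall_inP=> e eM; apply/subsetP=> x xe; rewrite !inE (subsetP (hs e eM)) // andbT.
    apply/eqP=> xu; move: hne; rewrite negb_exists_in => /forall_inP /(_ e eM).
    by rewrite -xu xe.
apply: leq_trans (subset_leq_card sub) _.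
rewrite cardsU; apply: leq_trans (leq_subr _ _) _; rewrite leq_add2l.
apply: leq_trans (union_bound _ _) _.
by apply: leq_sum=> v _; apply: hA.
Qed.


Lemma mset0 (U : {set V}) : #|mset U 0| <= 1.
Proof.
rewrite -(cards1 (set0 : {set {set V}})); apply: subset_leq_card.
apply/subsetP=> M; rewrite !inE => /and3P [_ /eqP /cards0_eq -> _]; exact: eqxx.
Qed.

Lemma sum_bound (U : {set V}) u k b :
  (forall v, v \in U :\ u -> #|mset (U :\ u :\ v) k| <= b) ->
  \sum_(v in U :\ u) #|mset (U :\ u :\ v) k| <= #|U :\ u| * b.
Proof.
move=> H; rewrite -sum_nat_const; exact: leq_sum.
Qed.

Lemma mset_bound k : (forall U : {set V}, #|U| <= 2 * k -> #|mset U k| <= oddfact k) /\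
                     (forall U : {set V}, #|U| <= (2 * k).+1 -> #|mset U k| <= oddfact k.+1).
Proof.
elim: k => [|k [IE IP]]; first by split=> U _; apply: mset0.
have cD (U : {set V}) u : u \in U -> #|U :\ u| = #|U| - 1.
  by move=> uU; rewrite (cardsD1 u U) uU; lia.
have E : forall U : {set V}, #|U| <= 2 * k.+1 -> #|mset U k.+1| <= oddfact k.+1.
  move=> U hU; case: (set_0Vmem U) => [->|[u uU]].
    by rewrite mset_zero // cards0.
  apply: leq_trans (mset_rec k uU) _.
  rewrite mset_zero ?cards0 ?add0n; last by rewrite cD //; lia.
  apply: leq_trans (sum_bound (b := oddfact k) _) _.
    by move=> v vU; apply: IE; rewrite cD // cD //; lia.
  by rewrite /= cD //; apply: leq_mul => //; lia.
split=> // U hU; case: (set_0Vmem U) => [->|[u uU]].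
  by rewrite mset_zero // cards0.
apply: leq_trans (mset_rec k uU) _.
have h1 := E (U :\ u) (ltac:(rewrite cD //; lia)).
apply: leq_trans (leq_add h1 (sum_bound (b := oddfact k.+1) _)) _.
  by move=> v vU; apply: IP; rewrite cD // cD //; lia.
rewrite [oddfact k.+2]/= cD //.
have : #|U| - 1 <= (2 * k.+1) by lia.
move=> h; rewrite -[X in X + _]mul1n -mulnDl; apply: leq_mul => //; lia.
Qed.

End Count.


Section Main.
Variable n : nat.
Local Notation V := 'I_(2 * n - 1).
Local Notation Ed := {set V}.
Local Notation Mt := {set Ed}.

Definition star (G : {set Mt}) (S : Mt) := [set M in G | S \subset M].

Lemma star_bound (G : {set Mt}) (S : Mt) : (forall M, M \in G -> near_perfect M) ->
  #|star G S| <= oddfact (n - #|S|).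
Proof.
move=> HG; case: (set_0Vmem (star G S)) => [->|[M0]]; first by rewrite cards0.
rewrite inE => /andP [M0G SM0].
have /andP [hM0 /eqP cM0] := HG M0 M0G.
have hS : is_matching S := matching_sub SM0 hM0.
have sS : #|S| <= n - 1 by rewrite -cM0; apply: subset_leq_card.
have setDUK (A B : Mt) : A \subset B -> A :|: (B :\: A) = B.
  move=> sAB; apply/setP=> x; rewrite !inE; case: (boolP (x \in A)) => xA //=.
  by rewrite (subsetP sAB).
pose f (M : Mt) := M :\: S.
have inj : {in star G S &, injective f}.
  move=> M N; rewrite !inE => /andP [_ hM] /andP [_ hN] eq.
  rewrite /f in eq; by rewrite -(setDUK _ _ hM) -(setDUK _ _ hN) eq.
rewrite -(card_in_imset inj).
apply: (@leq_trans #|mset (~: cover S) (n - 1 - #|S|)|).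
  apply: subset_leq_card; apply/subsetP=> _ /imsetP [M + ->].
  rewrite inE => /andP [MG SM].
  have /andP [hM /eqP cM] := HG M MG.
  have [H1 H2] := matchingP hM.
  rewrite inE; apply/and3P; split.
  - by apply: matching_sub hM; apply: subsetDl.
  - by rewrite /f cardsD (setIidPr SM) cM.
  - apply/forall_inP=> e; rewrite inE => /andP [eS eM].
    apply/subsetP=> x xe; rewrite inE; apply/negP=> /bigcupP [g gS xg].
    have gM := subsetP SM g gS.
    have ge : e != g by apply/eqP=> eg; rewrite eg gS in eS.
    by have := disjointFr (H2 _ _ eM gM ge) xe; rewrite xg.
have [_ hP] := mset_bound (2 * n - 1) (n - 1 - #|S|).
apply: leq_trans (hP _ _) _.
  by rewrite cardsCs setCK card_ord cover_card //; lia.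
have key : forall a s, s <= a - 1 -> oddfact (a - 1 - s).+1 <= oddfact (a - s).
  move=> a s hs; have [a0|apos] := posnP a.
    have e1 : (a - 1 - s).+1 = 1 by lia.
    have e2 : a - s = 0 by lia.
    by rewrite e1 e2.
  have e1 : (a - 1 - s).+1 = a - s by lia.
  by rewrite e1.
exact: key.
Qed.


End Main.

Fixpoint Qf (n s : nat) : nat :=
  match s with 0 => 1 | s'.+1 => Qf n s' * (2 * (n - s') - 1) end.

Lemma Qf_oddfact n s : s <= n -> Qf n s * oddfact (n - s) = oddfact n.
Proof.
elim: s => [|s IH] hs; first by rewrite mul1n subn0.
rewrite /= -mulnA -IH; last by lia.
congr (_ * _).
have e : n - s = (n - s.+1).+1 by lia.
rewrite e /=; congr (_ * _); rewrite -e; lia.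
Qed.

Lemma Qf_gt0 n s : s <= n -> 0 < Qf n s.
Proof.
elim: s => [|s IH] hs //=; rewrite muln_gt0 IH; last by lia.
by apply/andP; split => //; lia.
Qed.

Lemma le_2_3 d : 2 ^ d <= 3 ^ d.
Proof. by elim: d => // d IH; rewrite !expnS; apply: leq_mul. Qed.

Section Decomp.
Variable n q : nat.
Local Notation V := 'I_(2 * n - 1).
Local Notation Ed := {set V}.
Local Notation Mt := {set Ed}.
Variable F : {set Mt}.
Hypothesis HF : forall M, M \in F -> near_perfect M.

Definition W (G : {set Mt}) (S : Mt) :=
  #|star G S| * 2 ^ #|S| * 3 ^ (n - #|S|) * Qf n #|S|.

Definition spreadP (P : {set Mt}) (S : Mt) : Prop :=
  forall e, e \notin S -> #|[set M in P | e \in M]| * (2 * (2 * (n - #|S|) - 1)) <= 3 * #|P|.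

Lemma star_size (G : {set Mt}) S : G \subset F -> star G S != set0 -> #|S| <= n - 1.
Proof.
move=> GF; case/set0Pn=> M; rewrite inE => /andP [MG SM].
have /andP [_ /eqP <-] := HF (subsetP GF M MG).
exact: subset_leq_card.
Qed.

Lemma decomp : forall G : {set Mt}, G \subset F -> exists SS : {set Mt},
  (forall S : Mt, S \in SS -> #|S| <= q /\ exists P : {set Mt},
     [/\ P \subset F, P != set0, (forall M, M \in P -> S \subset M) & spreadP P S]) /\
  #|[set M in G | ~~ [exists S in SS, S \subset M]]| * 3 ^ q.+1 <= oddfact n * 2 ^ q.+1.
Proof.
move=> G; move: {2}#|G| (leqnn #|G|) => k.
elim: k G => [|k IH] G hk GF.
  exists set0; split=> [S|]; first by rewrite inE.
  move: hk; rewrite leqn0 => /eqP /cards0_eq ->.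
  by rewrite (_ : [set M in set0 | _] = set0) ?cards0 //; apply/setP=> M; rewrite !inE.
case: (set_0Vmem G) => [G0|[M0 M0G]].
  exists set0; split=> [S|]; first by rewrite inE.
  by rewrite (_ : [set M in G | _] = set0) ?cards0 //; apply/setP=> M; rewrite !inE G0 inE.
have HG : forall M, M \in G -> near_perfect M by move=> M MG; apply: HF; apply: (subsetP GF).
case: (@arg_maxnP Mt set0 predT (W G) isT) => S _ Smax.
have starG0 : star G set0 = G by apply/setP=> M; rewrite !inE sub0set andbT.
have W0 : W G set0 = #|G| * 3 ^ n by rewrite /W starG0 cards0 /= subn0 !muln1.
have Gpos : 0 < #|G| by apply/card_gt0P; exists M0.
have WS := Smax set0 isT.
have starS : star G S != set0.
  rewrite -card_gt0 lt0n; apply/eqP=> h0; move: WS; rewrite W0 /W h0 !mul0n.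
  by apply/negP; rewrite -ltnNge muln_gt0 Gpos expn_gt0.
have sS := star_size GF starS.
set s := #|S| in sS WS *.
case: (ltnP q s) => hqs.
  exists set0; split=> [S'|]; first by rewrite inE.
  rewrite (_ : [set M in G | _] = G); last first.
    by apply/setP=> M; rewrite !inE; case: (M \in G) => //=; apply/existsP=> [[x]]; rewrite inE.
  have h1 : #|G| * 3 ^ s * 3 ^ (n - s) <= oddfact n * 2 ^ s * 3 ^ (n - s).
    have e3n : 3 ^ n = 3 ^ s * 3 ^ (n - s) by rewrite -expnD subnKC //; lia.
    rewrite -mulnA -e3n; rewrite W0 in WS; apply: leq_trans WS _; rewrite /W -/s.
    rewrite -(Qf_oddfact (n := n) (s := s)); last by lia.
    have := star_bound S HG; rewrite -/s => hb.
    have := leq_mul (leq_mul (leq_mul hb (leqnn (2 ^ s))) (leqnn (3 ^ (n - s)))) (leqnn (Qf n s)).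
    move/leq_trans; apply.
    set A := 2 ^ s; set B := 3 ^ (n - s); set Q := Qf n s; set O := oddfact (n - s).
    clearbody A B Q O; lia.
  rewrite leq_pmul2r ?expn_gt0 // in h1.
  have e : s = q.+1 + (s - q.+1) by lia.
  rewrite e !expnD !mulnA in h1.
  rewrite -(@leq_pmul2r (3 ^ (s - q.+1))) ?expn_gt0 //.
  apply: leq_trans h1 _; rewrite leq_mul2l; apply/orP; right; exact: le_2_3.
pose P := star G S.
have PG : P \subset G by apply/subsetP=> M; rewrite inE => /andP [].
have hsp : spreadP P S.
  move=> e eS.
  have eq : [set M in P | e \in M] = star G (e |: S).
    apply/setP=> M; rewrite !inE subUset sub1set.
    by case: (M \in G); case: (S \subset M); case: (e \in M).
  rewrite eq.
  case: (set_0Vmem (star G (e |: S))) => [->|[M1 M1s]]; first by rewrite cards0.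
  have s1 : #|e |: S| = s.+1 by rewrite cardsU1 eS.
  have := star_size (S := e |: S) GF (ltac:(by apply/set0Pn; exists M1)).
  rewrite s1 => hs1.
  have := Smax (e |: S) isT; rewrite /W s1 -/s -/P.
  have e3 : n - s = (n - s.+1).+1 by lia.
  rewrite e3 !expnS /= -e3.
  set c1 := #|star G (e |: S)|; set c := #|P|.
  set X2 := 2 ^ s; set X3 := 3 ^ (n - s.+1); set Q := Qf n s; set d := 2 * (n - s) - 1.
  have Xpos : 0 < X2 * X3 * Q.
    by rewrite !muln_gt0 !expn_gt0 /= Qf_gt0 //; lia.
  move=> h; clearbody c1 c X2 X3 Q d.
  have h' : (c1 * (2 * d)) * (X2 * X3 * Q) <= (3 * c) * (X2 * X3 * Q) by lia.
  by rewrite leq_pmul2r // in h'.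
have Pne : P != set0 by [].
have hk' : #|G :\: P| <= k.
  have e : #|G :\: P| = #|G| - #|P| by rewrite cardsD (setIidPr PG).
  have : 0 < #|P| by rewrite card_gt0.
  have : #|P| <= #|G| by apply: subset_leq_card.
  lia.
have [SS' [H1 H2]] := IH (G :\: P) hk' (subset_trans (subsetDl G P) GF).
exists (S |: SS'); split.
- move=> S0; rewrite !inE => /orP [/eqP ->|S0in]; last exact: H1.
  split; first by [].
  exists P; split => //.
  + exact: subset_trans PG GF.
  + by move=> M; rewrite inE => /andP [].
- apply: leq_trans H2; rewrite leq_mul2r; apply/orP; right; apply: subset_leq_card.
  apply/subsetP=> M; rewrite !inE => /andP [MG hno].
  have SnM : ~~ (S \subset M).
    by move: hno; apply: contra => SM; apply/exists_inP; exists S; rewrite ?inE ?eqxx.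
  rewrite MG (negbTE SnM) /=.
  move: hno; apply: contra => /exists_inP [S1 S1in S1M]; apply/exists_inP; exists S1 => //.
  by rewrite inE S1in orbT.
Qed.


Lemma avoid (P : {set Mt}) (S : Mt) (A : {set Ed}) : P != set0 -> spreadP P S ->
  (forall e, e \in A -> e \notin S) -> 3 * #|A| < 2 * (2 * (n - #|S|) - 1) ->
  exists2 M, M \in P & forall e, e \in A -> e \notin M.
Proof.
move=> Pne hsp hA hc.
set c := 2 * (2 * (n - #|S|) - 1) in hc hsp.
pose Bad := \bigcup_(e in A) [set M in P | e \in M].
have h1 := union_bound A (fun e => [set M in P | e \in M]).
have h2 : c * (\sum_(e in A) #|[set M in P | e \in M]|) <= #|A| * (3 * #|P|).
  rewrite big_distrr /= -sum_nat_const; apply: leq_sum => e eA.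
  by rewrite mulnC; apply: hsp; apply: hA.
have Ppos : 0 < #|P| by rewrite card_gt0.
have hB : #|Bad| < #|P|.
  have : c * #|Bad| <= c * (\sum_(e in A) #|[set M in P | e \in M]|) by rewrite leq_mul2l h1 orbT.
  move=> h3; have h4 := leq_trans h3 h2.
  have h5 : #|A| * (3 * #|P|) < c * #|P| by rewrite mulnA [#|A| * 3]mulnC ltn_pmul2r.
  have h6 : c * #|Bad| < c * #|P| by apply: leq_ltn_trans h4 h5.
  by rewrite ltn_pmul2l in h6 => //; apply: leq_ltn_trans _ hc.
have : P :\: Bad != set0.
  rewrite -card_gt0 cardsD.
  have : #|P :&: Bad| <= #|Bad| by apply: subset_leq_card; apply: subsetIr.
  lia.
case/set0Pn=> M; rewrite inE => /andP [MB MP]; exists M => // e eA.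
apply/negP=> eM; move/negP: MB; apply; apply/bigcupP; exists e => //.
by rewrite inE MP eM.
Qed.

Variable t : nat.
Hypothesis Ht : t_intersecting t F.
Hypothesis hq : 0 < q.
Hypothesis hnq : 4 * q <= n.

Lemma pairwise (S S' : Mt) (P P' : {set Mt}) : #|S| <= q -> #|S'| <= q ->
  P \subset F -> P != set0 -> (forall M, M \in P -> S \subset M) -> spreadP P S ->
  P' \subset F -> P' != set0 -> (forall M, M \in P' -> S' \subset M) -> spreadP P' S' ->
  t <= #|S :&: S'|.
Proof.
move=> hS hS' PF Pne PS Psp P'F P'ne P'S P'sp.
rewrite leqNgt; apply/negP=> hlt.
have [M MP MA] : exists2 M, M \in P & forall e, e \in S' :\: S -> e \notin M.
  apply: (avoid (S := S)) => //.
    by move=> e; rewrite inE => /andP [].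
  have : #|S' :\: S| <= q by apply: leq_trans hS'; apply: subset_leq_card; apply: subsetDl.
  lia.
have MF := subsetP PF M MP.
have /andP [_ /eqP cM] := HF MF.
have [M' M'P M'A] : exists2 M', M' \in P' & forall e, e \in M :\: S' -> e \notin M'.
  apply: (avoid (S := S')) => //.
    by move=> e; rewrite inE => /andP [].
  have : #|M :\: S'| <= n - 1 by rewrite -cM; apply: subset_leq_card; apply: subsetDl.
  lia.
have M'F := subsetP P'F M' M'P.
have sub : M :&: M' \subset S :&: S'.
  apply/subsetP=> e; rewrite !inE => /andP [eM eM'].
  case: (boolP (e \in S')) => eS'; last first.
    by move: (M'A e); rewrite !inE eS' eM /= eM' => /(_ isT).
  case: (boolP (e \in S)) => eS //.
  by move: (MA e); rewrite !inE eS' eS eM => /(_ isT).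
have := subset_leq_card sub.
move: Ht => /forall_inP /(_ M MF) /forall_inP /(_ M' M'F).
lia.
Qed.

End Decomp.


Lemma card_lt_notsub (X : finType) (A B : {set X}) : ~~ (A \subset B) -> #|A :&: B| < #|A|.
Proof.
move=> nAB; rewrite ltn_neqAle subset_leq_card ?subsetIl // andbT.
apply: contra nAB => /eqP h.
have e : A :&: B = A by apply/eqP; rewrite eqEcard subsetIl h leqnn.
by rewrite -e subsetIr.
Qed.


Lemma exists_subset (X : finType) (A : {set X}) k : k <= #|A| ->
  exists2 T : {set X}, T \subset A & #|T| = k.
Proof.
move=> hk.
have : 0 < #|[set T : {set X} | T \subset A & #|T| == k]| by rewrite cards_draws bin_gt0.
case/card_gt0P=> T; rewrite inE => /andP [TA /eqP cT]; by exists T.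
Qed.

Lemma ffact_le_exp s t : s ^_ t <= s ^ t.
Proof.
elim: t => [|t IH] //; rewrite ffactnSr expnS mulnC; apply: leq_mul => //; exact: leq_subr.
Qed.

Lemma bin_le_exp s t : 'C(s, t) <= s ^ t.
Proof.
apply: leq_trans (ffact_le_exp s t); rewrite -bin_ffact; apply: leq_pmulr; exact: fact_gt0.
Qed.

Lemma leq_pow_base a b k : a <= b -> a ^ k <= b ^ k.
Proof. by move=> h; elim: k => // k IH; rewrite !expnS; apply: leq_mul. Qed.

Section Final.
Variable n q t : nat.
Local Notation V := 'I_(2 * n - 1).
Local Notation Ed := {set V}.
Local Notation Mt := {set Ed}.
Variable F : {set Mt}.
Hypothesis HF : forall M, M \in F -> near_perfect M.
Hypothesis Ht : t_intersecting t F.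
Hypothesis hq : 0 < q.
Hypothesis hnq : 4 * q <= n.
Hypothesis htn : t < n.
Hypothesis hR : oddfact n * 2 ^ q.+1 <= oddfact (n - t.+1) * 3 ^ q.+1.
Hypothesis hX1 : n <= 2 * (n - t.+1) + 1.
Hypothesis hX2 : q ^ t * q + 1 <= 2 * (n - t.+1) + 1.

Lemma union_star (A : {set Ed}) (T : Mt) :
  #|\bigcup_(e in A) star F (e |: T)| <= #|A :\: T| * oddfact (n - t.+1) -> True.
Proof. by []. Qed.

Lemma sum_star (A : {set Ed}) (T : Mt) : #|T| = t ->
  \sum_(e in A :\: T) #|star F (e |: T)| <= #|A| * oddfact (n - t.+1).
Proof.
move=> cT.
apply: (@leq_trans (\sum_(e in A :\: T) oddfact (n - t.+1))).
  apply: leq_sum => e; rewrite inE => /andP [eT _].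
  by have := star_bound (e |: T) HF; rewrite cardsU1 eT cT.
rewrite sum_nat_const leq_mul2r; apply/orP; right; apply: subset_leq_card; exact: subsetDl.
Qed.

Theorem final_bound : #|F| <= oddfact (n - t).
Proof.
have k1 : 1 + (n - 1) <= 2 * (n - t.+1) + 1 by lia.
have k2 : 1 + q ^ t * q <= 2 * (n - t.+1) + 1 by lia.
set N1 := oddfact (n - t.+1).
have eNt : oddfact (n - t) = (2 * (n - t.+1) + 1) * N1.
  have e : n - t = (n - t.+1).+1 by lia.
  by rewrite e /= /N1; congr (_ * _); lia.
have [SS [H1 H2]] := decomp q HF (subxx F).
set R := [set M in F | ~~ [exists S in SS, S \subset M]] in H2.
have hRc : #|R| <= N1.
  by rewrite -(@leq_pmul2r (3 ^ q.+1)) ?expn_gt0 //; apply: leq_trans H2 hR.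
have inter : forall S S', S \in SS -> S' \in SS -> t <= #|S :&: S'|.
  move=> S S' SS1 SS2.
  have [hS [P [PF Pne PS Psp]]] := H1 S SS1.
  have [hS' [P' [P'F P'ne P'S P'sp]]] := H1 S' SS2.
  exact: (pairwise HF Ht hq hnq hS hS' PF Pne PS Psp P'F P'ne P'S P'sp).
case: (set_0Vmem SS) => [SS0|[S0 S0in]].
  have : F \subset R.
    apply/subsetP=> M MF; rewrite inE MF /=; apply/exists_inP=> [[S]]; by rewrite SS0 inE.
  move/subset_leq_card=> h; rewrite eNt; apply: leq_trans h _; apply: leq_trans hRc _.
  by apply: leq_pmull; rewrite addn1.
have [hS0 _] := H1 S0 S0in.
case: (boolP [exists T : Mt, [&& T \subset S0, #|T| == t & [forall S in SS, T \subset S]]]).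
- case/existsP=> T /and3P [TS0 /eqP cT /forall_inP TSS].
  have sub1 : F \subset R :|: star F T.
    apply/subsetP=> M MF; rewrite !inE MF /=.
    case: (boolP [exists S in SS, S \subset M]) => //= /exists_inP [S SSS SM].
    exact: subset_trans (TSS S SSS) SM.
  case: (boolP [forall M in F, T \subset M]) => [/forall_inP allT|].
    have : F \subset star F T by apply/subsetP=> M MF; rewrite inE MF allT.
    move/subset_leq_card=> h; apply: leq_trans h _.
    by have := star_bound T HF; rewrite cT.
  rewrite negb_forall_in => /exists_inP [M1 M1F nTM1].
  have sub2 : star F T \subset \bigcup_(e in M1 :\: T) star F (e |: T).
    apply/subsetP=> M; rewrite inE => /andP [MF TM].
    case: (boolP [exists e in M1 :\: T, e \in M]) => [/exists_inP [e eD eM]|].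
      apply/bigcupP; exists e => //; rewrite inE MF subUset sub1set eM TM.
      by [].
    rewrite negb_exists_in => /forall_inP none.
    have hsub : M :&: M1 \subset T :&: M1.
      apply/subsetP=> e; rewrite !inE => /andP [eM eM1]; rewrite eM1 andbT.
      apply/negPn/negP=> eT; move: (none e); rewrite !inE eT eM1 eM => /(_ isT).
      by [].
    have h1 := subset_leq_card hsub.
    have h2 := card_lt_notsub nTM1.
    move: Ht => /forall_inP /(_ M MF) /forall_inP /(_ M1 M1F) h3.
    by move: (leq_ltn_trans (leq_trans h3 h1) h2); rewrite cT ltnn.
  have c2 := leq_trans (subset_leq_card sub2) (union_bound _ _).
  have c3 := leq_trans c2 (sum_star M1 cT).
  have /andP [_ /eqP cM1] := HF M1F.
  rewrite cM1 in c3.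
  have c1 : #|F| <= #|R| + #|star F T|.
    by apply: leq_trans (subset_leq_card sub1) _; rewrite cardsU leq_subr.
  rewrite eNt; apply: leq_trans c1 _; apply: leq_trans (leq_add hRc c3) _.
  by rewrite -[N1 in N1 + _]mul1n -mulnDl leq_mul2r k1 orbT.
rewrite negb_exists => /forallP noT.
pose TT := [set T : Mt | T \subset S0 & #|T| == t].
have cTT : #|TT| <= q ^ t.
  by rewrite cards_draws; apply: leq_trans (bin_le_exp _ _) _; apply: leq_pow_base.
pose ST (T : Mt) := odflt set0 [pick S in SS | ~~ (T \subset S)].
have STP : forall T, T \in TT -> ST T \in SS /\ ~~ (T \subset ST T).
  move=> T; rewrite inE => /andP [TS0 /eqP cT]; rewrite /ST.
  case: pickP => [S /andP [SS1 nTS] | none] //=.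
  exfalso; move/negP: (noT T); apply; rewrite TS0 cT eqxx /=.
  by apply/forall_inP => S SS1; move: (none S); rewrite SS1 /=; move/negbFE.
have sub3 : F \subset R :|: \bigcup_(T in TT) \bigcup_(e in ST T :\: T) star F (e |: T).
  apply/subsetP=> M MF; rewrite !inE MF /=.
  case: (boolP [exists S in SS, S \subset M]) => //= /exists_inP [S SSS SM].
  have [T TSS cT] := exists_subset (inter S S0 SSS S0in).
  have TT1 : T \in TT by rewrite inE cT eqxx andbT; apply: subset_trans TSS (subsetIr _ _).
  have [STin nT] := STP T TT1.
  have TS : T \subset S by apply: subset_trans TSS (subsetIl _ _).
  have : exists2 e, e \in S :&: ST T & e \notin T.
    case: (boolP [exists e in S :&: ST T, e \notin T]) => [/exists_inP //|].
    rewrite negb_exists_in => /forall_inP hall; exfalso.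
    have hsub : S :&: ST T \subset T :&: ST T.
      apply/subsetP=> e eI; rewrite inE (negbNE (hall e eI)) /=.
      by move: eI; rewrite inE => /andP [].
    have h1 := subset_leq_card hsub.
    have h2 := card_lt_notsub nT.
    have h3 := inter S (ST T) SSS STin.
    by move: (leq_ltn_trans (leq_trans h3 h1) h2); rewrite cT ltnn.
  case=> e; rewrite inE => /andP [eS eST] eT.
  apply/bigcupP; exists T => //; apply/bigcupP; exists e; first by rewrite inE eT.
  rewrite inE MF subUset sub1set (subsetP SM e eS) /=; exact: subset_trans TS SM.
have c1 : #|F| <= #|R| + #|\bigcup_(T in TT) \bigcup_(e in ST T :\: T) star F (e |: T)|.
  by apply: leq_trans (subset_leq_card sub3) _; rewrite cardsU leq_subr.
have c2 : #|\bigcup_(T in TT) \bigcup_(e in ST T :\: T) star F (e |: T)| <= #|TT| * (q * N1).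
  apply: leq_trans (union_bound _ _) _.
  rewrite -sum_nat_const; apply: leq_sum => T TT1.
  apply: leq_trans (union_bound _ _) _.
  have [STin _] := STP T TT1.
  have [hST _] := H1 _ STin.
  move: (TT1); rewrite inE => /andP [_ /eqP cT].
  apply: leq_trans (sum_star _ cT) _.
  by rewrite leq_mul2r hST orbT.
rewrite eNt; apply: leq_trans c1 _; apply: leq_trans (leq_add hRc c2) _.
have : #|TT| * (q * N1) <= q ^ t * q * N1 by rewrite mulnA !leq_mul2r cTT !orbT.
move=> h; apply: leq_trans (leq_add (leqnn N1) h) _.
by rewrite -[N1 in N1 + _]mul1n -mulnDl leq_mul2r k2 orbT.
Qed.

End Final.


Lemma bin_le_pow2 x b : 'C(x, b) <= 2 ^ x.
Proof.
elim: x b => [|x IH] [|b] //=; first by rewrite bin0 expn_gt0.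
by rewrite binS expnS mul2n -addnn; apply: leq_add.
Qed.

Lemma ffact_lb x b : (x - b) ^ b <= x ^_ b.
Proof.
elim: b => [|b IH] //; rewrite ffactnSr expnS mulnC; apply: leq_mul.
  apply: leq_trans IH; apply: leq_pow_base; lia.
lia.
Qed.

Lemma asympt C a : exists x0, forall x, x0 <= x -> C * x ^ a <= 2 ^ x.
Proof.
exists (2 * a + 2 + C * 2 ^ a * (a.+1)`!) => x hx.
set y := x - a.+1.
have hy : C * 2 ^ a * (a.+1)`! <= y by rewrite /y; lia.
have hxy : x <= 2 * y by rewrite /y; lia.
rewrite -(@leq_pmul2r (a.+1)`!) ?fact_gt0 //.
apply: (@leq_trans (y ^ a.+1)); last first.
  apply: leq_trans (ffact_lb x a.+1) _.
  by rewrite -bin_ffact leq_pmul2r ?fact_gt0 // bin_le_pow2.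
rewrite expnS.
apply: (@leq_trans (C * 2 ^ a * (a.+1)`! * y ^ a)); last by rewrite leq_mul2r hy orbT.
have h : x ^ a <= 2 ^ a * y ^ a by rewrite -expnMn; apply: leq_pow_base.
have h' := leq_mul (leqnn (C * (a.+1)`!)) h.
move: h'; clearbody y; clear h hy hx hxy.
generalize (2 ^ a) (y ^ a) (x ^ a) ((a.+1)`!) => w z xa v h'; lia.
Qed.

Lemma Qf_le n s : Qf n s <= (2 * n) ^ s.
Proof.
elim: s => [|s IH] //=; rewrite expnS mulnC; apply: leq_mul => //; lia.
Qed.

Lemma oddfact_le n b : b <= n -> oddfact n <= (2 * n) ^ b * oddfact (n - b).
Proof.
move=> hb; rewrite -(Qf_oddfact hb) leq_mul2r Qf_le orbT //.
Qed.

Theorem mainTheorem10 (t : nat) :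
  exists n0 : nat, forall n : nat, n0 <= n ->
    forall F : {set {set {set 'I_(2*n-1)}}},
      (forall M, M \in F -> near_perfect M) ->
      t_intersecting t F ->
      #|F| <= oddfact (n - t).
Proof.
pose a := t.+1; pose C := 4 * ((2 * a) ^ a + 10 * a).
have [x0 hx0] := asympt C a.
exists (2 ^ x0) => n hn F HF Ht.
have npos : 0 < n by apply: leq_trans hn; rewrite expn_gt0.
pose k := trunc_log 2 n.
have hk0 : x0 <= k := trunc_log_max (isT : 1 < 2) hn.
have hk1 : 2 ^ k <= n := trunc_logP (isT : 1 < 2) npos.
have hk2 : n < 2 ^ k.+1 := trunc_log_ltn n (isT : 1 < 2).
pose x := k.+2; pose q := 2 * x * a - 1.
have hC : C * x ^ a <= 4 * n.
  apply: leq_trans (hx0 x _) _; first by rewrite /x; lia.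
  by rewrite /x !expnS mulnA leq_mul2l hk1.
have apos : 0 < a by [].
have hxa : x <= x ^ a by rewrite -{1}(expn1 x); apply: leq_pexp2l.
have hqa : q ^ a <= (2 * a) ^ a * x ^ a.
  rewrite -expnMn; apply: leq_pow_base; rewrite /q; lia.
have hq : 0 < q by rewrite /q /x; lia.
have key : (2 * a) ^ a * x ^ a + 10 * a * x ^ a <= n.
  move: hC; rewrite /C; generalize ((2 * a) ^ a) (x ^ a) => P X; lia.
have h10 : 8 * a * x + 2 * a <= 10 * a * x ^ a.
  have : 1 <= x ^ a by rewrite expn_gt0.
  move: hxa; generalize (x ^ a) => X; nia.
have hnq : 4 * q <= n.
  move: key h10; rewrite /q; generalize ((2 * a) ^ a) (x ^ a) => P X; lia.
have htn : t < n.
  move: key h10; rewrite /q /a; generalize ((2 * t.+1) ^ t.+1) (x ^ t.+1) => P X; nia.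
have hX1 : n <= 2 * (n - t.+1) + 1.
  move: key h10; rewrite /q /a; generalize ((2 * t.+1) ^ t.+1) (x ^ t.+1) => P X; nia.
have hX2 : q ^ t * q + 1 <= 2 * (n - t.+1) + 1.
  rewrite -expnSr -/a.
  move: key h10 hqa; generalize ((2 * a) ^ a) (x ^ a) (q ^ a) => P X Q; rewrite /a; nia.
have hR : oddfact n * 2 ^ q.+1 <= oddfact (n - t.+1) * 3 ^ q.+1.
  have eq1 : q.+1 = 2 * (x * a) by rewrite /q /x; lia.
  have h2n : (2 * n) ^ a <= 2 ^ (x * a).
    rewrite expnM; apply: leq_pow_base; rewrite /x !expnS.
    move: hk2; rewrite expnS; generalize (2 ^ k) => K; lia.
  apply: leq_trans (leq_mul (oddfact_le (b := a) _) (leqnn _)) _; first by rewrite /a; lia.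
  rewrite mulnAC [oddfact _ * _]mulnC leq_mul2r; apply/orP; right.
  apply: leq_trans (leq_mul h2n (leqnn _)) _.
  rewrite eq1 -expnD (_ : x * a + 2 * (x * a) = 3 * (x * a)); last by lia.
  by rewrite !expnM; do 2 apply: leq_pow_base.
exact: (final_bound HF Ht hq hnq htn hR hX1 hX2).
Qed.
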